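(* Let $r$ be even with $r\mid n$, and let $\pi=(1,2,\dots,r)(r+1,\dots,2r)\cdots(n-r+1,\dots,n)\in S_n$, with centralizer $Z(\pi)$ in $S_n$. Then $$\sum_{w\in I_n\cap Z(\pi)}(-1)^{\mathrm{inv}_w(\pi)}=\begin{cases}0,& n/r\text{ odd},\\ \dfrac{(n/r)!}{(n/(2r))!\,2^{n/(2r)}}\,r^{n/(2r)},& n/r\text{ even}.\end{cases}$$
   Context: $I_n$ is the set of involutions (including identity) of $S_n$. For $w\in I_n$, $\mathrm{Pair}(w)$ is the set of 2-cycles of $w$ as unordered 2-subsets; $\mathrm{Inv}(\pi)=\{\{i,j\}:(j-i)(\pi(j)-\pi(i))<0\}$; $\mathrm{inv}_w(\pi)=\#(\mathrm{Inv}(\pi)\cap\mathrm{Pair}(w))$. *)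

(* Defs.v *)
(* Points {1..n} are represented 0-based as 'I_n. *)
From HB Require Import structures.
From mathcomp Require Import all_boot all_order all_fingroup all_algebra.
Set Implicit Arguments. Unset Strict Implicit. Unset Printing Implicit Defensive.

Definition involution n (w : 'S_n) : bool := (w * w == 1)%g.

Definition in_centralizer n (p w : 'S_n) : bool := (w * p == p * w)%g.

Definition Pair n (w : 'S_n) : {set {set 'I_n}} :=
  [set [set i; w i] | i in [set i : 'I_n | w i != i]].

(* Inv(p) = {{i,j} : (j - i)(p j - p i) < 0}, i.e. pairs i < j with p j < p i *)
Definition Inv n (p : 'S_n) : {set {set 'I_n}} :=
  [set A : {set 'I_n} | [exists i : 'I_n, exists j : 'I_n,
     [&& A == [set i; j], (nat_of_ord i < nat_of_ord j)%N
       & (nat_of_ord (p j) < nat_of_ord (p i))%N]]].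

Definition invw n (w p : 'S_n) : nat := #|Inv p :&: Pair w|.

(* Main.v *)
Require Import Defs.
From HB Require Import structures.
From mathcomp Require Import all_boot all_order all_fingroup all_algebra.
From Stdlib Require Import Lia.
Import GRing.Theory.
Set Implicit Arguments. Unset Strict Implicit. Unset Printing Implicit Defensive.

Section Main.
Variables (n r : nat) (p : 'S_n).
Hypothesis r0 : 0 < r.
Hypothesis reven : ~~ odd r.
Hypothesis pdef : forall i : 'I_n, val (p i) = (i %/ r) * r + (i %% r).+1 %% r.

Local Notation blk x := (nat_of_ord x %/ r).

Lemma ord_eq (x y : 'I_n) : blk x = blk y -> x %% r = y %% r -> x = y.
Proof. by move=> e1 e2; apply: val_inj; rewrite /= (divn_eq x r) (divn_eq y r) e1 e2. Qed.

Lemma blk_mk q s : s < r -> (q * r + s) %/ r = q.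
Proof. by move=> sr; rewrite divnMDl // divn_small // addn0. Qed.

Lemma mod_mk q s : (q * r + s) %% r = s %% r.
Proof. by rewrite modnMDl. Qed.

Lemma pX k (x : 'I_n) : val ((p ^+ k)%g x) = blk x * r + (x %% r + k) %% r.
Proof.
elim: k => [|k IH]; first by rewrite expg0 perm1 addn0 modn_mod -divn_eq.
rewrite expgSr permM pdef IH blk_mk ?ltn_mod // mod_mk modn_mod.
by rewrite -addn1 modnDml -addnA addn1.
Qed.

Lemma blk_pX k (x : 'I_n) : blk ((p ^+ k)%g x) = blk x.
Proof. by rewrite pX blk_mk // ltn_mod. Qed.

Lemma mod_pX k (x : 'I_n) : (p ^+ k)%g x %% r = (x %% r + k) %% r.
Proof. by rewrite pX mod_mk modn_mod. Qed.

Lemma pX_congr k1 k2 (x : 'I_n) : k1 = k2 %[mod r] -> (p ^+ k1)%g x = (p ^+ k2)%g x.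
Proof.
move=> e; apply: ord_eq; rewrite ?blk_pX // !mod_pX.
by rewrite -modnDmr e modnDmr.
Qed.

Lemma pXD i j (x : 'I_n) : (p ^+ i)%g ((p ^+ j)%g x) = (p ^+ (j + i))%g x.
Proof. by rewrite expgD permM. Qed.

Lemma pXr (x : 'I_n) : (p ^+ r)%g x = x.
Proof. by rewrite (@pX_congr r 0) ?modnn ?mod0n // expg0 perm1. Qed.

Lemma same_blk (x y : 'I_n) : blk x = blk y -> y = (p ^+ (y %% r + r - x %% r))%g x.
Proof.
move=> e; apply: ord_eq; rewrite ?blk_pX // mod_pX.
rewrite subnKC; first by rewrite modnDr modn_mod.
by apply: leq_trans (ltnW (ltn_pmod _ r0)) (leq_addl _ _).

Qed.

Lemma modB a c : c <= r -> a %% r + r - c = a + r - c %[mod r].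
Proof.
move=> cr; apply/eqP; rewrite -(eqn_modDr c) !subnK ?(leq_trans cr) ?leq_addl //.
by rewrite modnDml.
Qed.

Definition commp (w : 'S_n) := forall x, w (p x) = p (w x).

Lemma commpP w : in_centralizer p w -> commp w.
Proof. by move/eqP=> e x; rewrite -!permM e. Qed.

Lemma comm_pX w k x : commp w -> w ((p ^+ k)%g x) = (p ^+ k)%g (w x).
Proof.
move=> c; elim: k => [|k IH]; first by rewrite expg0 !perm1.
by rewrite expgSr !permM c IH.
Qed.

Lemma blk_w w (x y : 'I_n) : commp w -> blk x = blk y -> blk (w x) = blk (w y).
Proof. by move=> c /same_blk ->; rewrite comm_pX // blk_pX. Qed.


Lemma lt_mk q1 q2 s1 s2 : q1 < q2 -> s1 < r -> q1 * r + s1 < q2 * r + s2.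
Proof.
move=> q12 s1r; apply: (@leq_trans (q1.+1 * r)).
  by rewrite mulSn addnC ltn_add2r.
by apply: (leq_trans _ (leq_addr s2 _)); rewrite leq_pmul2r.
Qed.

Lemma inv_pair (i j : 'I_n) : i < j ->
  (p j < p i) = (blk i == blk j) && (j %% r == r.-1).
Proof.
move=> ij; rewrite !pdef.
have le : blk i <= blk j by apply: leq_div2r; apply: ltnW.
case: (ltngtP (blk i) (blk j)) le => [lt _|//|ebl _].
  by rewrite /= ltnNge ltnW // lt_mk // ltn_pmod.
rewrite ebl /= ltn_add2l.
have si : i %% r < j %% r.
  by move: ij; rewrite {1}(divn_eq i r) {1}(divn_eq j r) ebl ltn_add2l.
have sj : j %% r < r by rewrite ltn_pmod.
rewrite (@modn_small (i %% r).+1); last by apply: leq_ltn_trans si sj.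
case: eqP => [->|ne].
  by rewrite prednK // modnn.
rewrite modn_small; first by rewrite ltnNge ltnW.
move: ne sj; set a := j %% r => ne sj; apply/ltP; move/ltP: sj; lia.
Qed.

Lemma involP (w : 'S_n) : involution w -> forall x, w (w x) = x.
Proof. by move/eqP=> e x; rewrite -permM e perm1. Qed.

Definition Lset (w : 'S_n) := [set j : 'I_n | (j %% r == r.-1) && (w j != j) && (blk (w j) == blk j)].

Lemma invwE w : involution w -> invw w p = #|Lset w|.
Proof.
move=> /involP wK; rewrite /invw /Lset /Inv /Pair.
have e : Inv p :&: Pair w = [set [set j; w j] | j in Lset w].
  apply/setP => A; rewrite inE; apply/andP/imsetP.
    case=> hInv hPair.
    move: hInv; rewrite /Inv inE => /existsP[a /existsP[b /and3P[/eqP EA ab pba]]].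
    move: hPair; rewrite /Pair => /imsetP[i]; rewrite inE => wi EA'.
    move: pba; rewrite inv_pair // => /andP[/eqP bab /eqP lb].
    have bA : b \in A by rewrite EA !inE eqxx orbT.
    rewrite EA' !inE in bA; case/orP: bA => /eqP bi.
      subst i.
      have : w b \in A by rewrite EA' !inE eqxx orbT.
      rewrite EA !inE (negbTE wi) orbF => /eqP wba.
      exists b; last by rewrite wba setUC.
      by rewrite /Lset inE lb eqxx wi wba bab eqxx.
    have wbi : w b = i by rewrite bi wK.
    have : i \in A by rewrite EA' !inE eqxx.
    rewrite EA !inE; case/orP => /eqP ia; last first.
      by move: wi; rewrite -bi ia eqxx.
    exists b; last by rewrite wbi ia setUC.
    rewrite /Lset inE lb eqxx wbi /= ia bab eqxx andbT.
    by apply/eqP => e; move: ab; rewrite e ltnn.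
  case=> j; rewrite /Lset inE => /andP[/andP[/eqP l ne] /eqP bl] ->.
  have wl : w j %% r < j %% r.
    rewrite l ltn_neqAle -ltnS prednK // ltn_pmod // andbT.
    by apply/eqP => e; move: ne; rewrite (ord_eq bl) ?e ?l ?eqxx.
  have lt : w j < j.
    by rewrite (divn_eq (w j) r) (divn_eq j r) bl ltn_add2l.
  split.
    rewrite inE; apply/existsP; exists (w j); apply/existsP; exists j.
    by rewrite setUC eqxx lt inv_pair // bl eqxx l eqxx.
  by apply/imsetP; exists j; rewrite // /Lset inE.
rewrite e card_in_imset //.
move=> j1 j2; rewrite /Lset !inE => /andP[/andP[/eqP l1 _] /eqP b1] /andP[/andP[/eqP l2 _] /eqP b2] E.
have : j1 \in [set j2; w j2] by rewrite -E !inE eqxx.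
rewrite !inE => /orP[/eqP //| /eqP e1].
by apply: ord_eq; rewrite ?l1 ?l2 // e1 b2.
Qed.


Definition good (U : {set 'I_n}) (w : 'S_n) :=
  involution w && in_centralizer p w && [forall x, (x \notin U) ==> (w x == x)].
Definition Blk (x : 'I_n) := [set y : 'I_n | blk y == blk x].
Definition sat (U : {set 'I_n}) := forall x y : 'I_n, blk x = blk y -> (x \in U) = (y \in U).

Lemma goodP (U : {set 'I_n}) (w : 'S_n) : reflect [/\ forall x, w (w x) = x, commp w & forall x, x \notin U -> w x = x]
  (good U w).
Proof.
apply: (iffP idP).
  case/andP=> [/andP[inv com] /forallP fx]; split.
  - exact: involP.
  - exact: commpP.
  by move=> x xU; move: (fx x); rewrite xU => /eqP.
case=> inv com fx; apply/andP; split; first (apply/andP; split).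
- by apply/eqP/permP => x; rewrite permM perm1.
- by apply/eqP/permP => x; rewrite !permM com.
by apply/forallP => x; apply/implyP => xU; rewrite fx.
Qed.

Lemma good_inv (U : {set 'I_n}) (w : 'S_n) : good U w -> involution w.
Proof. by case/andP=> /andP[]. Qed.

Lemma tV (V : {set 'I_n}) (t : 'S_n) : (forall x, t (t x) = x) -> (forall x, x \notin V -> t x = x) ->
  forall x, x \in V -> t x \in V.
Proof.
move=> tK tf x xV; apply: contraT => h; have e := tf _ h; rewrite tK in e.
by rewrite -e xV in h.
Qed.


Lemma Gsum (F : 'S_n -> int) (U : {set 'I_n}) (x0 : 'I_n) (t : 'S_n) :
  sat U -> x0 \in U -> t x0 \in U -> (forall x, t (t x) = x) -> commp t ->
  (forall x, x \notin (Blk x0 :|: Blk (t x0)) -> t x = x) ->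
  (\sum_(w | good U w && (w x0 == t x0)) F w =
   \sum_(w | good (U :\: (Blk x0 :|: Blk (t x0))) w) F (t * w)%g)%R.
Proof.
move=> sU x0U tx0U tK tc tf.
set V := Blk x0 :|: Blk (t x0).
have VU : forall x, x \in V -> x \in U.
  by move=> x; rewrite !inE => /orP[] /eqP e; [rewrite (sU _ _ e) | rewrite (sU _ _ e)].
have tVV := tV tK tf.
rewrite (reindex_inj (mulgI t)); apply: eq_bigl => w'.
have wE : forall x, (t * w')%g x = w' (t x) by move=> x; rewrite permM.
apply/idP/idP.
  case/andP => /goodP[wK wc wf] /eqP e0.
  have w'E : forall y, w' y = (t * w')%g (t y) by move=> y; rewrite wE tK.
  have agree : forall x, x \in V -> (t * w')%g x = t x.
    move=> x; rewrite !inE => /orP[] /eqP e.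
      by rewrite (same_blk (esym e)) comm_pX // e0 comm_pX.
    rewrite (same_blk (esym e)) !comm_pX // tK; congr ((p ^+ _)%g _).
    by rewrite -{1}e0 wK.
  have w'V : forall y, y \in V -> w' y = y.
    by move=> y yV; rewrite w'E agree ?tVV // tK.
  have w'o : forall y, y \notin V -> w' y = (t * w')%g y.
    by move=> y yV; rewrite w'E tf.
  have wo : forall y, y \notin V -> (t * w')%g y \notin V.
    by move=> y yV; apply: contra yV => h; rewrite -(wK y) agree // tVV.
  apply/goodP; split.
  - move=> y; case: (boolP (y \in V)) => yV; first by rewrite !w'V.
    by rewrite (w'o _ yV) w'o ?wK // wo.
  - by move=> y; rewrite !w'E tc wc.
  move=> y; rewrite in_setD negb_and negbK => /orP[yV|yU]; first exact: w'V.
  have yV : y \notin V by apply: contra yU; apply: VU.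
  by rewrite w'o // wf.
case/goodP => [w'K w'c w'f].
have w'V : forall y, y \in V -> w' y = y.
  by move=> y yV; rewrite w'f // in_setD yV.
apply/andP; split; last by apply/eqP; rewrite wE w'V // !inE eqxx orbT.
apply/goodP; split.
- move=> x; rewrite !wE; case: (boolP (x \in V)) => xV.
    by rewrite (w'V (t x)) ?tVV // tK w'V.
  have h : w' x \notin V by apply: contra xV => h; rewrite -(w'K x) w'V.
  by rewrite (tf x xV) (tf _ h) w'K.
- by move=> x; rewrite !wE tc w'c.
move=> x xU; have xV : x \notin V by apply: contra xU; apply: VU.
by rewrite wE tf // w'f // in_setD (negbTE xU) andbF.
Qed.

Lemma invw_mul (t w' : 'S_n) (V : {set 'I_n}) :
  (forall x, t (t x) = x) -> (forall x, x \notin V -> t x = x) -> (forall x, x \in V -> w' x = x) ->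
  involution t -> involution w' -> involution (t * w')%g ->
  invw (t * w')%g p = invw t p + invw w' p.
Proof.
move=> tK tf w'V it iw iw2; rewrite !invwE //.
have tVV := tV tK tf.
rewrite -(cardsID V (Lset (t * w')%g)); congr (_ + _); apply: eq_card => j;
  rewrite /Lset !inE permM; case: (boolP (j \in V)) => jV /=.
- by rewrite w'V ?tVV // andbT.
- by rewrite tf // eqxx !andbF.
- by rewrite w'V // eqxx !andbF.
- by rewrite tf.
Qed.


Lemma pointK (t w' : 'S_n) (V : {set 'I_n}) :
  (forall x, t (t x) = x) -> (forall x, x \notin V -> t x = x) -> (forall x, x \in V -> w' x = x) ->
  (forall x, w' (w' x) = x) -> involution (t * w')%g.
Proof.
move=> tK tf w'V w'K; have tVV := tV tK tf.
apply/eqP/permP => x; rewrite !permM perm1.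
case: (boolP (x \in V)) => xV; first by rewrite (w'V (t x)) ?tVV // tK w'V.
have h : w' x \notin V by apply: contra xV => h; rewrite -(w'K x) w'V.
by rewrite (tf x xV) (tf _ h) w'K.
Qed.

Let h := r./2.
Lemma hh : h + h = r.
Proof. by rewrite addnn /h -[RHS](odd_double_half r) (negbTE reven). Qed.
Lemma h0 : 0 < h.
Proof. by move: r0; rewrite -hh; case: h. Qed.
Lemma hr : h < r.
Proof. by rewrite -hh -addn1 leq_add2l h0. Qed.

Lemma p_pX k (x : 'I_n) : (p ^+ k)%g (p x) = p ((p ^+ k)%g x).
Proof. by rewrite -!permM -expgS expgSr. Qed.

Lemma blk_p (x : 'I_n) : blk (p x) = blk x.
Proof. by have := blk_pX 1 x; rewrite expg1. Qed.

Lemma mod_p (x : 'I_n) : p x %% r = (x %% r + 1) %% r.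
Proof. by have := mod_pX 1 x; rewrite expg1. Qed.

Definition rhof (x0 x : 'I_n) := if blk x == blk x0 then (p ^+ h)%g x else x.
Lemma rhoK x0 : cancel (rhof x0) (rhof x0).
Proof.
move=> x; rewrite /rhof; case e: (blk x == blk x0); last by rewrite /= e.
by rewrite blk_pX e pXD hh pXr.
Qed.
Definition rho x0 : 'S_n := perm (can_inj (rhoK x0)).
Lemma rhoE x0 x : rho x0 x = rhof x0 x.
Proof. by rewrite permE. Qed.

Lemma rho_K x0 x : rho x0 (rho x0 x) = x.
Proof. by rewrite !rhoE rhoK. Qed.
Lemma rho_c x0 : commp (rho x0).
Proof. by move=> x; rewrite !rhoE /rhof blk_p; case: ifP => // _; rewrite p_pX. Qed.
Lemma rho_x0 x0 : rho x0 x0 = (p ^+ h)%g x0.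
Proof. by rewrite rhoE /rhof eqxx. Qed.
Lemma Blk_pX k x : Blk ((p ^+ k)%g x) = Blk x.
Proof. by apply/setP => y; rewrite !inE blk_pX. Qed.
Lemma rho_f x0 x : x \notin (Blk x0 :|: Blk (rho x0 x0)) -> rho x0 x = x.
Proof. by rewrite rho_x0 Blk_pX setUid inE rhoE /rhof => /negbTE ->. Qed.

Lemma rho_L x0 : #|Lset (rho x0)| = 1.
Proof.
set j0 := (p ^+ (r.-1 + r - x0 %% r))%g x0.
rewrite -(cards1 j0); apply: eq_card => j; rewrite /Lset !inE rhoE /rhof.
have j0m : j0 %% r = r.-1.
  rewrite mod_pX subnKC; first by rewrite modnDr modn_small // ltn_predL.
  by apply: leq_trans (ltnW (ltn_pmod _ r0)) (leq_addl _ _).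
case: eqP => [jm|jm] /=; last first.
  by apply/esym/negbTE/eqP => e; apply: jm; rewrite e j0m.
case bj: (blk j == blk x0); last first.
  rewrite eqxx /=; apply/esym/negbTE/eqP => e.
  by move: bj; rewrite e blk_pX eqxx.
have ne : (p ^+ h)%g j != j.
  apply/eqP => e; have := mod_pX h j; rewrite e => E.
  have E2 : (j %% r + h) %% r = (j %% r + 0) %% r by rewrite addn0 modn_mod -E.
  move/eqP: E2; rewrite eqn_modDl mod0n modn_small ?hr // => /eqP h00.
  by move: h0; rewrite h00.
rewrite blk_pX eqxx andbT ne; apply/esym/eqP.
by apply: ord_eq; rewrite ?jm ?j0m // blk_pX (eqP bj).
Qed.

Definition swf (x0 y x : 'I_n) :=
  if blk y == blk x0 then x else
  if blk x == blk x0 then (p ^+ (x %% r + r - x0 %% r))%g y else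
  if blk x == blk y then (p ^+ (x %% r + r - y %% r))%g x0 else x.

Lemma back (a b x : 'I_n) : blk x = blk a ->
  (p ^+ (((p ^+ (x %% r + r - a %% r))%g b) %% r + r - b %% r))%g a = x.
Proof.
move=> e; rewrite [RHS](same_blk (esym e)); apply: pX_congr.
rewrite mod_pX modB ?(ltnW (ltn_pmod _ r0)) //.
by rewrite -addnA addKn modnDr.
Qed.

Lemma swK x0 y : cancel (swf x0 y) (swf x0 y).
Proof.
move=> x; rewrite /swf; case B: (blk y == blk x0) => //=.
case Bx: (blk x == blk x0).
  by rewrite blk_pX B eqxx back // (eqP Bx).
case By: (blk x == blk y); last by rewrite Bx By.
by rewrite blk_pX eqxx back // (eqP By).
Qed.

Definition sw x0 y : 'S_n := perm (can_inj (swK x0 y)).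
Lemma swE x0 y x : sw x0 y x = swf x0 y x.
Proof. by rewrite permE. Qed.
Lemma sw_K x0 y x : sw x0 y (sw x0 y x) = x.
Proof. by rewrite !swE swK. Qed.

Lemma shiftp (a b x : 'I_n) :
  (p ^+ ((p x) %% r + r - a %% r))%g b = p ((p ^+ (x %% r + r - a %% r))%g b).
Proof.
rewrite -[RHS]permM -expgSr; apply: pX_congr.
rewrite mod_p modB ?(ltnW (ltn_pmod _ r0)) // addnAC -addnBAC ?addn1 //.
by apply: leq_trans (ltnW (ltn_pmod _ r0)) (leq_addl _ _).
Qed.

Lemma sw_c x0 y : commp (sw x0 y).
Proof.
move=> x; rewrite !swE /swf blk_p; case B: (blk y == blk x0) => //.
case Bx: (blk x == blk x0); first exact: shiftp.
by case By: (blk x == blk y); first exact: shiftp.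
Qed.

Lemma sw_x0 x0 y : blk y != blk x0 -> sw x0 y x0 = y.
Proof.
move=> /negbTE B; rewrite swE /swf B eqxx addKn.
by rewrite pXr.
Qed.

Lemma sw_f x0 y x : blk y != blk x0 -> x \notin (Blk x0 :|: Blk (sw x0 y x0)) -> sw x0 y x = x.
Proof.
move=> B; rewrite sw_x0 // !inE negb_or => /andP[/negbTE b1 /negbTE b2].
by rewrite swE /swf (negbTE B) b1 b2.
Qed.

Lemma sw_L x0 y : blk y != blk x0 -> #|Lset (sw x0 y)| = 0.
Proof.
move=> B; apply: eq_card0 => j; rewrite /Lset inE swE /swf (negbTE B).
case Bx: (blk j == blk x0).
  by rewrite blk_pX (eqP Bx) (negbTE B) andbF.
case By: (blk j == blk y); last by rewrite eqxx andbF.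
by rewrite blk_pX (eqP By) (eq_sym (blk x0)) (negbTE B) andbF.
Qed.

Lemma only2 (U : {set 'I_n}) (w : 'S_n) x0 : good U w -> blk (w x0) = blk x0 ->
  w x0 = x0 \/ w x0 = (p ^+ h)%g x0.
Proof.
case/goodP=> wK wc _ e.
set c := w x0 %% r + r - x0 %% r.
have yE : w x0 = (p ^+ c)%g x0 := same_blk (esym e).
have E : (p ^+ (c + c))%g x0 = x0 by rewrite -pXD -yE -comm_pX // -yE wK.
have E2 : (x0 %% r + (c + c)) %% r = (x0 %% r + 0) %% r by rewrite -mod_pX E addn0 modn_mod.
move/eqP: E2; rewrite eqn_modDl mod0n => E3.
have dv : r %| c + c by rewrite /dvdn.
have dh : h %| c by rewrite -hh !addnn -!muln2 dvdn_pmul2r // in dv.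
rewrite yE (@pX_congr c (c %% r) x0 (esym (modn_mod c r))).
have cE : c %% r = odd (c %/ h) * h.
  by rewrite -{1}(divnK dh) -hh addnn -mul2n -muln_modl modn2.
rewrite cE; case: (odd _); first by right; rewrite mul1n.
by left; rewrite mul0n expg0 perm1.
Qed.

Lemma card_Blk x : #|Blk x| = r.
Proof.
have -> : Blk x = [set (p ^+ (nat_of_ord j))%g x | j : 'I_r].
  apply/setP => y; rewrite /Blk inE; apply/eqP/imsetP => [e|[j _ ->]]; last by rewrite blk_pX.
  exists (Ordinal (ltn_pmod (y %% r + r - x %% r) r0)) => //=.
  by rewrite [LHS](same_blk (esym e)) (@pX_congr _ ((y %% r + r - x %% r) %% r) _ (esym (modn_mod _ _))).
rewrite card_imset ?card_ord //.
move=> i j /(congr1 (fun z : 'I_n => z %% r)) /=; rewrite !mod_pX => /eqP.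
by rewrite eqn_modDl !modn_small ?ltn_ord // => /eqP e; apply: val_inj.
Qed.

Lemma invol_of (t : 'S_n) : (forall x, t (t x) = x) -> involution t.
Proof. by move=> tK; apply/eqP/permP => x; rewrite permM perm1 tK. Qed.

Lemma ph_ne (j : 'I_n) : (p ^+ h)%g j != j.
Proof.
apply/eqP => e; have := mod_pX h j; rewrite e => E.
have E2 : (j %% r + h) %% r = (j %% r + 0) %% r by rewrite addn0 modn_mod -E.
move/eqP: E2; rewrite eqn_modDl mod0n modn_small ?hr // => /eqP h00.
by move: h0; rewrite h00.
Qed.

Definition F (w : 'S_n) : int := ((-1) ^+ invw w p)%R.
Definition T (U : {set 'I_n}) : int := (\sum_(w | good U w) F w)%R.

Lemma S_fix U x0 : sat U -> x0 \in U ->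
  (\sum_(w | good U w && (w x0 == x0)) F w = T (U :\: Blk x0))%R.
Proof.
move=> sU x0U.
transitivity (\sum_(w | good U w && (w x0 == (1%g : 'S_n) x0)) F w)%R.
  by apply: eq_bigl => w; rewrite perm1.
rewrite (@Gsum F U x0 1%g sU x0U); try solve [by rewrite perm1 | by move=> x; rewrite !perm1].
by rewrite perm1 setUid /T; apply: eq_bigr => w _; rewrite mul1g.
Qed.

Lemma S_rho U x0 : sat U -> x0 \in U ->
  (\sum_(w | good U w && (w x0 == (p ^+ h)%g x0)) F w = - T (U :\: Blk x0))%R.
Proof.
move=> sU x0U.
transitivity (\sum_(w | good U w && (w x0 == rho x0 x0)) F w)%R.
  by apply: eq_bigl => w; rewrite rho_x0.
rewrite (@Gsum F U x0 (rho x0) sU x0U); try solve [exact: rho_f | exact: rho_c | exact: rho_K | by rewrite rho_x0 (sU _ _ (blk_pX h x0))].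
rewrite rho_x0 Blk_pX setUid /T -sumrN; apply: eq_bigr => w /goodP[wK _ wf].
have rf : forall x, x \notin Blk x0 -> rho x0 x = x.
  by move=> x; rewrite inE rhoE /rhof => /negbTE ->.
have wV : forall x, x \in Blk x0 -> w x = x.
  by move=> x xB; rewrite wf // in_setD xB.
rewrite /F (@invw_mul (rho x0) w (Blk x0)) //.
- by rewrite invwE ?rho_L ?exprD ?expr1 ?mulN1r //; apply: invol_of; exact: rho_K.
- exact: rho_K.
- by apply: invol_of; exact: rho_K.
- exact: invol_of.
by apply: (@pointK _ _ (Blk x0)) => //; exact: rho_K.
Qed.

Lemma S_sw U x0 y : sat U -> x0 \in U -> y \in U -> blk y != blk x0 ->
  (\sum_(w | good U w && (w x0 == y)) F w = T (U :\: (Blk x0 :|: Blk y)))%R.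
Proof.
move=> sU x0U yU B.
transitivity (\sum_(w | good U w && (w x0 == sw x0 y x0)) F w)%R.
  by apply: eq_bigl => w; rewrite sw_x0.
rewrite (@Gsum F U x0 (sw x0 y) sU x0U); try solve [by move=> x; apply: sw_f | exact: sw_c | exact: sw_K | by rewrite sw_x0].
rewrite sw_x0 // /T; apply: eq_bigr => w /goodP[wK _ wf].
have rf : forall x, x \notin Blk x0 :|: Blk y -> sw x0 y x = x.
  by move=> x xV; apply: sw_f; rewrite ?sw_x0.
have wV : forall x, x \in Blk x0 :|: Blk y -> w x = x.
  by move=> x xB; rewrite wf // in_setD xB.
rewrite /F (@invw_mul (sw x0 y) w (Blk x0 :|: Blk y)) //.
- by rewrite invwE ?sw_L ?add0n //; apply: invol_of; exact: sw_K.
- exact: sw_K.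
- by apply: invol_of; exact: sw_K.
- exact: invol_of.
by apply: (@pointK _ _ (Blk x0 :|: Blk y)) => //; exact: sw_K.
Qed.

Lemma S_zero U x0 y : y \in Blk x0 -> y != x0 -> y != (p ^+ h)%g x0 ->
  (\sum_(w | good U w && (w x0 == y)) F w = 0)%R.
Proof.
move=> yB n1 n2; apply: big_pred0 => w; apply/negP => /andP[gw /eqP e].
move: yB; rewrite inE -e => /eqP /(only2 gw); rewrite e.
by case=> E; [move: n1 | move: n2]; rewrite E eqxx.
Qed.

Lemma sat_Blk x : sat (Blk x).
Proof. by move=> a b e; rewrite !inE e. Qed.
Lemma sat_U A B : sat A -> sat B -> sat (A :|: B).
Proof. by move=> sA sB a b e; rewrite !inE (sA _ _ e) (sB _ _ e). Qed.
Lemma sat_D A B : sat A -> sat B -> sat (A :\: B).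
Proof. by move=> sA sB a b e; rewrite !inE (sA _ _ e) (sB _ _ e). Qed.

Lemma T0 : T set0 = 1%R.
Proof.
rewrite /T (big_pred1 1%g).
  rewrite /F invwE; last by apply/eqP; rewrite mulg1.
  have -> : #|Lset 1| = 0 by apply: eq_card0 => j; rewrite /Lset inE perm1 eqxx andbF.
  by rewrite expr0.
move=> w /=; apply/goodP/eqP => [[_ _ wf]|->].
  by apply/permP => x; rewrite perm1 wf // inE.
by split => x; rewrite ?perm1.
Qed.

Fixpoint f k := match k with 0 => 1 | 1 => 0 | k'.+2 => k'.+1 * r * f k' end.
Lemma fS k : f k.+1 = k * r * f k.-1.
Proof. by case: k. Qed.

Lemma mainT k : forall U, sat U -> #|U| = k * r -> T U = Posz (f k).
Proof.
elim/ltn_ind: k => k IH U sU cU.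
case: k IH cU => [|k] IH cU.
  by move: cU; rewrite mul0n => /cards0_eq ->; rewrite T0.
have : 0 < #|U| by rewrite cU muln_gt0 r0.
rewrite card_gt0 => /set0Pn[x0 x0U].
have BU : forall y, y \in Blk x0 -> y \in U.
  by move=> y; rewrite inE => /eqP e; rewrite (sU _ _ e).
have BsU : Blk x0 \subset U by apply/subsetP.
rewrite /T (partition_big (fun w : 'S_n => w x0) (fun y => y \in U)) /=; last first.
  move=> w /goodP[wK _ wf]; apply: contraT => hh; have := wf _ hh; rewrite wK => e.
  by rewrite -e x0U in hh.
rewrite (bigID (fun y => y \in Blk x0)) /=.
have E1 : (\sum_(y | (y \in U) && (y \in Blk x0)) \sum_(w | good U w && (w x0 == y)) F w = 0)%R.
  rewrite (bigD1 x0) /=; last by rewrite x0U inE eqxx.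
  rewrite (bigD1 ((p ^+ h)%g x0)) /=; last first.
    by rewrite (sU _ _ (blk_pX h x0)) x0U inE blk_pX eqxx ph_ne.
  rewrite S_fix // S_rho // addrA addrN add0r.
  apply: big1 => y /andP[/andP[/andP[yU yB] n1] n2]; exact: S_zero.
rewrite E1 add0r.
rewrite (eq_bigr (fun _ => Posz (f k.-1))); last first.
  move=> y /andP[yU yB].
  have B : blk y != blk x0 by move: yB; rewrite inE.
  rewrite S_sw //; apply: IH; first by rewrite ltnS leq_pred.
    by apply: sat_D => //; apply: sat_U; apply: sat_Blk.
  have sub : Blk x0 :|: Blk y \subset U.
    rewrite subUset BsU; apply/subsetP => z; rewrite inE => /eqP e.
    by rewrite (sU _ _ e).
  rewrite cardsD (setIidPr sub) cardsU !card_Blk.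
  have -> : Blk x0 :&: Blk y = set0.
    apply/setP => z; rewrite !inE; apply/negbTE/andP => [[/eqP a /eqP b]].
    by move: B; rewrite -b a eqxx.
  by rewrite cards0 subn0 cU addnn -mul2n -mulnBl subSS subn1.
rewrite (eq_bigl (fun y => y \in U :\: Blk x0)); last by move=> y; rewrite in_setD andbC.
rewrite sumr_const cardsD (setIidPr BsU) card_Blk cU mulSn addKn.
transitivity (Posz (k * r * f k.-1)); last by rewrite -fS.
by rewrite -mulr_natr -!natz -natrM mulnC.
Qed.

Fixpoint G k := if k is k'.+1 then (k'.*2).+1 * G k' else 1.

Lemma fact2 k : (k.*2)`! = k`! * 2 ^ k * G k.
Proof.
elim: k => [|k IH] //=.
rewrite doubleS !factS IH expnS.
rewrite -!muln2; rewrite -!multE -?plusE; simpl; nia.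
Qed.

Lemma f_even k : f (k.*2) = G k * r ^ k.
Proof.
elim: k => [|k IH] //; rewrite doubleS /= IH expnS.
rewrite -!muln2; rewrite -!multE -?plusE; simpl; nia.
Qed.

Lemma f_odd k : f (k.*2).+1 = 0.
Proof.
elim: k => [|k IH] //.
have -> : f k.*2.+1.+2 = (k.*2.+1).+1 * r * f k.*2.+1 by [].
by rewrite IH muln0.
Qed.

Lemma fE m : f m = if odd m then 0 else (m`! %/ ((m./2)`! * 2 ^ (m./2))) * r ^ (m./2).
Proof.
have := odd_double_half m; case: (odd m) => /= e; rewrite -e.
  by rewrite add1n f_odd.
rewrite add0n doubleK f_even fact2 mulKn //.
by rewrite muln_gt0 fact_gt0 expn_gt0.
Qed.

End Main.

Unset Implicit Arguments.
Local Open Scope ring_scope.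

Theorem lemma3p4 (n r : nat) (p : 'S_n) :
  (0 < r)%N -> ~~ odd r -> (r %| n)%N ->
  (* p = (1,...,r)(r+1,...,2r)...(n-r+1,...,n), written 0-based *)
  (forall i : 'I_n, val (p i) = (i %/ r) * r + (i %% r).+1 %% r)%N ->
  \sum_(w : 'S_n | involution w && in_centralizer p w) (-1 : int) ^+ invw w p
  = (if odd (n %/ r) then 0
     else (((n %/ r)`! %/ ((n %/ (2 * r))`! * 2 ^ (n %/ (2 * r))))
           * r ^ (n %/ (2 * r)))%N%:Z).
Proof.
move=> r0 reven rdvd pdef.
have := @mainT n r p r0 reven pdef (n %/ r)%N setT.
rewrite cardsT card_ord divnK // => /(_ (fun a b _ => etrans (in_setT a) (esym (in_setT b))) erefl).
rewrite /T /F => E.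
transitivity (Posz (f r (n %/ r)%N)).
  rewrite -E; apply: eq_bigl => w; rewrite /good.
  by rewrite (_ : [forall x, _] = true) ?andbT //; apply/forallP => x; rewrite in_setT.
have e2 : (n %/ (2 * r) = (n %/ r)./2)%N by rewrite mulnC divnMA divn2.
rewrite fE e2.
by case: (odd _).
Qed.
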